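(* In the imprimitive setting described in the context, suppose $K_0\ne1$ and $K_v\cong D_{2m}$ where $m=n$ or $2m=n$. Then $K\cong\mathbb{Z}_p^2\rtimes\mathbb{Z}_2$ or $K\cong\mathbb{Z}_p^2\rtimes D_4$, where $D_4\cong\mathbb{Z}_2\times\mathbb{Z}_2$.
   Context: Setting: $p\ge3$ is a prime, $G$ is a transitive permutation group of degree $p^2$ on a set $\Omega$ with point stabilizers $G_v\cong D_{2n}$ (dihedral of order $2n$, $n\ge2$), and $G$ is imprimitive; $\mathcal{B}$ is a nontrivial complete block system of $G$ (blocks of size $p$), $K$ is the kernel of the action of $G$ on $\mathcal{B}$, $B\in\mathcal{B}$ is a block, $v\in B$, $K_v$ is the stabilizer of $v$ in $K$, and $K_0$ is the kernel of the action of $K$ on $B$. $D_{2m}$ is dihedral of order $2m$. *)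

(* Defs.v *)
From mathcomp Require Import all_boot all_fingroup all_solvable.
From mathcomp Require Import zmodp.
Set Implicit Arguments. Unset Strict Implicit. Unset Printing Implicit Defensive.
Local Open Scope group_scope.

(* Abstract dihedral group of order 2k, given by its standard presentation
   <x, y | x^k = y^2 = 1, x^y = x^-1>.  For k = 1 this is Z_2, for k = 2 it is
   the Klein four group Z_2 x Z_2. *)
Definition dihedral_of_order (gT : finGroupType) (G : {set gT}) (k : nat) : Prop :=
  G \isog Grp (x : y : x ^+ k, y ^+ 2, x ^ y = x^-1).

Definition block_system (T : finType) (G : {set {perm T}}) (P : {set {set T}}) : Prop :=
  partition P [set: T] /\ [acts G, on P | 'P^*].

(* Main.v *)
Require Import Defs.
From mathcomp Require Import all_boot all_fingroup all_solvable.
From mathcomp Require Import zmodp.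

Section Helpers.
Local Set Implicit Arguments.
Local Unset Strict Implicit.
Local Unset Printing Implicit Defensive.
Local Open Scope group_scope.

Lemma orbit_dvd (T : finType) (Y L : {group {perm T}}) x :
  Y <| L -> #|orbit 'P Y x| %| #|orbit 'P L x|.
Proof.
case/andP=> sYL nYL.
rewrite !card_orbit.
have ->: 'C_Y[x | 'P] = Y :&: 'C_L[x | 'P].
  by rewrite setIA (setIidPl sYL).
rewrite indexgI -indexMg -norm_joinEl; last first.
  exact: subset_trans (subsetIl _ _) nYL.
apply: indexSg; first exact: joing_subl.
by rewrite join_subG subsetIl sYL.
Qed.

Lemma orbit_small (T : finType) (Y L : {group {perm T}}) (C : {set T}) p x :
  prime p -> #|C| = p -> Y <| L -> orbit 'P L x = C ->
  orbit 'P Y x = [set x] \/ orbit 'P Y x = C.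
Proof.
move=> pr_p oC nYL oL.
have sYL := normal_sub nYL.
have sub: orbit 'P Y x \subset C by rewrite -oL /orbit imsetS.
have := orbit_dvd x nYL; rewrite oL oC.
case/primeP: pr_p => _ /[apply] /orP[] /eqP o.
  by left; apply/eqP; rewrite eq_sym eqEcard sub1set orbit_refl cards1 o.
by right; apply/eqP; rewrite eqEcard sub o oC leqnn.
Qed.

Lemma dih_elem (gT : finGroupType) (V : {group gT}) (x y z : gT) :
  <[x]> <*> <[y]> = V -> y ^+ 2 = 1 -> x ^ y = x^-1 ->
  z \in V -> z \notin <[x]> -> exists2 r, r \in <[x]> & z = r * y.
Proof.
move=> defV y2 xy zV zx.
have nxy : y \in 'N(<[x]>).
  by apply/normP; rewrite -cycleJ xy cycleV.
move: zV zx; rewrite -defV norm_joinEr ?cycle_subG // => /mulsgP[r t rx /cycleP[i ->] ->] zx.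
exists r => //; move: zx; rewrite -(expg_mod _ y2).
have : i %% 2 < 2 by rewrite ltn_mod.
case: (i %% 2) => [|[|//]] _; last by rewrite expg1.
by rewrite expg0 mulg1 rx.
Qed.

Lemma dih_inv (gT : finGroupType) (x y r0 r : gT) :
  x ^ y = x^-1 -> r0 \in <[x]> -> r \in <[x]> -> r ^ (r0 * y) = r^-1.
Proof.
move=> xy r0x /cycleP[i ->]; rewrite conjgM.
have -> : x ^+ i ^ r0 = x ^+ i.
  by apply/conjg_fixP/commgP; apply: (centsP (cycle_abelian x)) => //; rewrite mem_cycle.
by rewrite conjXg xy expgVn.
Qed.

Lemma dih_sq (gT : finGroupType) (x y r0 : gT) :
  y ^+ 2 = 1 -> x ^ y = x^-1 -> r0 \in <[x]> -> (r0 * y) ^+ 2 = 1.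
Proof.
move=> y2 xy r0x.
have yV : y^-1 = y by apply/eqP; rewrite eq_invg_mul -expg2 y2.
have := dih_inv xy (group1 _) r0x; rewrite mul1g conjgE yV => h.
by rewrite expg2 -mulgA h mulgV.
Qed.

Lemma comm_cyc_cent (gT : finGroupType) (X : {group gT}) h1 h2 :
  cyclic X -> h1 \in 'N(X) -> h2 \in 'N(X) -> [~ h1, h2] \in 'C(X).
Proof.
move=> cycX n1 n2.
have aA := Aut_cyclic_abelian cycX.
have f1 : conj_aut X h1 \in Aut X.
  exact: subsetP (Aut_conj_aut X 'N(X)) _ (mem_morphim (conj_aut X) n1 n1).
have f2 : conj_aut X h2 \in Aut X.
  exact: subsetP (Aut_conj_aut X 'N(X)) _ (mem_morphim (conj_aut X) n2 n2).
rewrite -ker_conj_aut; apply/kerP; first by rewrite groupR.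
rewrite morphR //; apply/eqP/commgP.
exact: (centsP aA).
Qed.

End Helpers.

Theorem mainTheorem11
  (p n m : nat) (Omega : finType) (G : {group {perm Omega}})
  (P : {set {set Omega}}) (B : {set Omega}) (v : Omega) :
  prime p -> 3 <= p ->
  #|Omega| = p ^ 2 ->
  [transitive G, on [set: Omega] | 'P] ->
  2 <= n ->
  (forall w : Omega, dihedral_of_order ('C_G[w | 'P])%g n) ->
  block_system G P ->
  (forall C, C \in P -> #|C| = p) ->
  B \in P -> v \in B ->
  let K := ('C_G(P | 'P^*))%g in
  let Kv := ('C_K[v | 'P])%g in
  let K0 := ('C_K(B | 'P))%g in
  K0 != 1%g ->
  dihedral_of_order Kv m ->
  (m = n \/ 2 * m = n) ->
  exists N H : {group {perm Omega}},
    [/\ (N ><| H = K)%g,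
        (N \isog setX (Zp p) (Zp p))%g
      & (H \isog Zp 2)%g \/ dihedral_of_order H 2].
Proof.
Local Open Scope group_scope.
move=> pr_p p3 _ trG _ _ [partP actsGP] cardP BP vB K Kv K0 K0n1 dihKv _.
have triP : trivIset P by case/and3P: partP.
have covP : cover P = [set: Omega] by case/and3P: partP => /eqP.
have blkP x : pblock P x \in P by rewrite pblock_mem // covP inE.
have blkx x : x \in pblock P x by rewrite mem_pblock covP inE.
have nKG : K <| G.
  by apply: normalGI actsGP (astab_normal _ _).
have sKG : K \subset G by exact: normal_sub nKG.
have sKN C : C \in P -> K \subset 'N(C | 'P).
  move=> CP; rewrite -astab1_set; apply: subset_trans (subsetIr _ _) _.
  by rewrite astabS // sub1set.
have KC C k x : C \in P -> k \in K -> x \in C -> k x \in C.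
  by move=> CP kK xC; rewrite -apermE (astabs_act _ (subsetP (sKN C CP) k kK)).
have trG2 x y : exists2 g, g \in G & y = g x.
  by have [g gG ->] := atransP2 trG (in_setT x) (in_setT y); exists g.
have orbL C x : C \in P -> x \in C -> orbit 'P 'N_G(C | 'P) x = C.
  move=> CP xC; apply/setP=> y; apply/imsetP/idP.
    case=> g /setIP[_ gN] ->; by rewrite (astabs_act _ gN).
  move=> yC; have [g gG yE] := trG2 x y.
  exists g => //; rewrite inE gG -astab1_set; apply/astab1P.
  have CgP : ('P^*)%act C g \in P by rewrite (astabs_act _ (subsetP actsGP g gG)).
  apply: (@eq_trans _ _ (pblock P y)).
    by apply: esym; apply: def_pblock triP CgP _; rewrite yE; apply: mem_setact.
  exact: def_pblock triP CP yC.
have nKL C : C \in P -> K <| 'N_G(C | 'P).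
  move=> CP; apply/andP; split; first by rewrite subsetI sKG sKN.
  exact: subset_trans (subsetIl _ _) (normal_norm nKG).
have orbK C x : C \in P -> x \in C -> orbit 'P K x = [set x] \/ orbit 'P K x = C.
  move=> CP xC; exact: (@orbit_small _ ('C_G(P | 'P^*))%G _ _ _ x pr_p (cardP C CP) (nKL C CP) (orbL C x CP xC)).
have [k kK0 kn1] := trivgPn _ K0n1.
have sK0K : K0 \subset K by exact: subsetIl.
have kK : k \in K := subsetP sK0K k kK0.
have [z kz] : exists z, k z != z.
  case: (pickP (fun z => k z != z)) => [z kz | h]; first by exists z.
  by case/eqP: kn1; apply/permP => z; move: (h z) => /negbFE/eqP; rewrite perm1.
have transK C x : C \in P -> x \in C -> orbit 'P K x = C.
  move=> CP xC; case: (orbK C x CP xC) => // ox; exfalso.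
  have sKx : K \subset 'C[x | 'P].
    apply/subsetP => h hK; apply/astab1P; apply/set1P; rewrite -ox; exact: mem_orbit.
  have [g gG zE] := trG2 x z.
  have kKg : k \in K :^ g by rewrite (normP (subsetP (normal_norm nKG) g gG)).
  have sKg : K :^ g \subset 'C[x | 'P] :^ g by rewrite conjSg.
  have := subsetP sKg k kKg; rewrite -astab1_act => /astab1P.
  by move=> h; move/eqP: kz; apply; rewrite zE; exact: h.
have oK : #|K| = (p * #|Kv|)%N.
  by rewrite -(card_orbit_stab 'P K v) (transK B v BP vB) (cardP B BP).
have nK0K : K0 <| K by apply: normalGI (sKN B BP) (astab_normal _ _).
have pK0 : p %| #|K0|.
  have zC := blkx z.
  have nK0K' : ('C_K(B | 'P))%G <| ('C_G(P | 'P^*))%G by exact: nK0K.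
  case: (orbit_small (x:=z) pr_p (cardP _ (blkP z)) nK0K' (transK _ z (blkP z) zC)) => o.
    have := mem_orbit 'P z kK0; rewrite o => /set1P /= h.
    by move/eqP: kz; case; exact: h.
  have := dvdn_indexg ('C_K(B | 'P))%G ('C_('C_K(B | 'P))[z | 'P]).
  by rewrite -card_orbit o (cardP _ (blkP z)).
have := @isoGrp_hom _ ('C_K[v|'P])%G _ dihKv.
case/existsP => -[x y] /=; rewrite !xpair_eqE.
case/and4P=> /eqP defKv _ /eqP y2 /eqP xy.
have sRKv : <[x]> \subset Kv by rewrite /Kv /K -defKv joing_subl.
have yKv : y \in Kv by rewrite /Kv /K -defKv mem_gen // inE cycle_id orbT.
have sKvK : Kv \subset K by exact: subsetIl.
have sK0Kv : K0 \subset Kv.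
  rewrite subsetI sK0K; apply: subset_trans (subsetIr _ _) _.
  by rewrite astabS // sub1set.
have oddp : odd p.
  by case: (even_prime pr_p) => // p2; move: p3; rewrite p2.
have oddR u : u \in Kv -> odd #[u] -> u \in <[x]>.
  move=> zKv oz; case: (boolP (u \in <[x]>)) => // zx.
  have [r rx zE] := dih_elem defKv y2 xy zKv zx.
  have := dih_sq y2 xy rx; rewrite -zE => /eqP; rewrite -order_dvdn => d2.
  case/primeP: (pdiv_prime (isT : 1 < 2)) => _ /(_ _ d2) /orP[] /eqP oz'.
    by move: zx; move/eqP: oz'; rewrite order_eq1 => /eqP ->; rewrite group1.
  by move: oz; rewrite oz'.
have [a aK0 oa] := Cauchy pr_p pK0.
have aKv : a \in Kv := subsetP sK0Kv a aK0.
have aR : a \in <[x]> by apply: oddR; rewrite // oa.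
have uniqP (X : {group {perm Omega}}) : X \subset Kv -> #|X| = p -> X :=: <[a]>.
  move=> sXKv oX.
  have sXR : X \subset <[x]>.
    apply/subsetP=> u uX; apply: oddR; first exact: subsetP sXKv u uX.
    have := order_dvdG uX; rewrite oX => /dvdn_odd; apply; exact: oddp.
  apply/eqP; rewrite (eq_subG_cyclic (cycle_cyclic x) sXR) ?cycle_subG //.
  by rewrite -orderE oa oX.
have sAK0 : <[a]> \subset K0 by rewrite cycle_subG.
have sAK : <[a]> \subset K := subset_trans sAK0 sK0K.
have nAK : K \subset 'N(<[a]>).
  apply/subsetP => h hK; apply/normP.
  have K0h : K0 :^ h = K0 by apply/normP; apply: (subsetP (normal_norm nK0K)).
  apply: (uniqP (<[a]> :^ h)%G).
  - by apply: subset_trans sK0Kv; rewrite /= -K0h conjSg.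
  - by rewrite /= cardJg -orderE oa.
have an1 : a != 1 by rewrite -order_eq1 oa; case: (p) pr_p => [|[]].
have [w aw] : exists w, a w != w.
  case: (pickP (fun w => a w != w)) => [w aw | hh]; first by exists w.
  by case/eqP: an1; apply/permP => w; move: (hh w) => /negbFE/eqP; rewrite perm1.
have [g gG wE] := trG2 v w.
have Kg : K :^ g = K by apply/normP; apply: (subsetP (normal_norm nKG)).
pose P2 := (<[a]> :^ g)%G.
have nP2K : K \subset 'N(P2) by rewrite /P2 normJ -Kg conjSg.
have sP2K : P2 \subset K by rewrite /P2 -Kg conjSg.
have sP2w : P2 \subset 'C[w | 'P].
  rewrite wE /P2 -[g v]/('P%act v g) astab1_act conjSg.
  by apply: subset_trans sAK0 (subset_trans sK0Kv (subsetIr _ _)).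
have aP2 : a \notin P2.
  apply/negP => /(subsetP sP2w) /astab1P /= h; by move/eqP: aw; apply.
have tiAP2 : <[a]> :&: P2 = 1.
  by apply: prime_TIg; rewrite ?cycle_subG // -orderE oa.
have oP2 : #|P2| = p by rewrite /P2 cardJg -orderE oa.
have cAP2 : P2 \subset 'C(<[a]>).
  apply/commG1P; apply/trivgP; rewrite -tiAP2 setIC.
  apply: commg_subI; rewrite subsetI subxx ?(subset_trans sP2K nAK) ?(subset_trans sAK nP2K) //.
have dS : <[a]> \x P2 = <[a]> <*> P2 by apply: dprodEY.
pose S := (<[a]> <*> P2)%G.
have oS : #|S| = (p * p)%N by rewrite /S -(dprod_card dS) -orderE oa oP2.
have nSK : S <| K.
  apply: normalY; first by rewrite /normal sAK nAK.
  by rewrite /normal sP2K nP2K.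
have oddS u : u \in S -> odd #[u].
  move=> uS; have := order_dvdG uS; rewrite oS => /dvdn_odd; apply.
  by rewrite oddM oddp.
have transS C x0 : C \in P -> x0 \in C -> orbit 'P S x0 = C.
  move=> CP xC; case: (orbit_small (x:=x0) pr_p (cardP C CP) nSK (transK C x0 CP xC)) => // o; exfalso.
  have sSx : S \subset 'C[x0 | 'P].
    apply/subsetP => h hS; apply/astab1P; apply/set1P; rewrite -o; exact: mem_orbit.
  have [g' g'G xE] := trG2 v x0.
  have Kg' : K :^ g' = K by apply/normP; apply: (subsetP (normal_norm nKG)).
  have sSKv : S :^ g'^-1 \subset Kv.
    rewrite sub_conjgV /Kv conjIg Kg' -astab1_act.
    have -> : 'P%act v g' = x0 by rewrite xE.
    rewrite subsetI sSx.
    by rewrite (normal_sub nSK).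
  have cycS : cyclic (S :^ g'^-1).
    apply: cyclicS (cycle_cyclic x); apply/subsetP => u uS.
    apply: oddR; first exact: subsetP sSKv u uS.
    by move: uS; rewrite mem_conjg => /oddS; rewrite orderJ.
  rewrite cyclicJ in cycS.
  have := eq_subG_cyclic cycS (joing_subl _ _ : <[a]> \subset S) (joing_subr _ _ : P2 \subset S).
  rewrite oP2 -orderE oa eqxx => /eqP eAP2.
  by move: aP2; rewrite -eAP2 cycle_id.
have nb (b : {perm Omega}) : b \in Kv -> #[b] = (p * p)%N -> False.
  move=> bKv ob.
  have sbKv : <[b]> \subset Kv by rewrite cycle_subG.
  pose X := 'C_<[b]>[w | 'P].
  have sXKv : X \subset Kv := subset_trans (subsetIl _ _) sbKv.
  have oX : (#|orbit 'P <[b]> w| * #|X|)%N = (p * p)%N by rewrite card_orbit_stab -orderE ob.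
  have sOC : orbit 'P <[b]> w \subset pblock P w.
    apply/subsetP => u /imsetP [h hb ->]; apply: KC; rewrite ?blkP ?blkx //.
    exact: subsetP (subset_trans sbKv sKvK) h hb.
  have leO : #|orbit 'P <[b]> w| <= p.
    by rewrite -(cardP _ (blkP w)); apply: subset_leq_card.
  have pX : p %| #|X|.
    case: (boolP (p %| #|X|)) => // npX; exfalso.
    have cX : coprime #|X| p by rewrite coprime_sym prime_coprime.
    have : #|X| %| p * p by rewrite -oX dvdn_mull.
    rewrite Gauss_dvdr // => Xp.
    have : #|X| %| 1 by rewrite -(eqnP cX) dvdn_gcd dvdnn Xp.
    rewrite dvdn1 => /eqP X1; move: oX; rewrite X1 muln1 => oO.
    have : p * p <= p * 1 by rewrite muln1 -oO.
    by rewrite leq_pmul2l ?prime_gt0 // leqNgt prime_gt1.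
  have [c cX oc] := Cauchy pr_p pX.
  have := uniqP <[c]>%G; rewrite /= cycle_subG -orderE oc => /(_ (subsetP sXKv c cX) erefl) ec.
  have : a \in 'C[w | 'P].
    apply: (subsetP (subsetIr <[b]> _)); rewrite -/X; apply: (subsetP (_ : <[c]> \subset X)); last by rewrite ec cycle_id.
    by rewrite cycle_subG.
  by move/astab1P => /= h; move/eqP: aw; apply.
have sAKv : <[a]> \subset Kv := subset_trans sAK0 sK0Kv.
have cop : coprime #|<[a]>| #|Kv : <[a]>|.
  rewrite -orderE oa prime_coprime //; apply/negP => pI.
  have ppKv : p * p %| #|Kv|.
    by rewrite -(Lagrange sAKv) -orderE oa dvdn_pmul2l ?prime_gt0.
  have [Q sylQ] := Sylow_exists p ('C_K[v|'P])%G.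
  have oQ := card_Hall sylQ.
  have sQKv : Q \subset Kv := pHall_sub sylQ.
  have ppQ : p * p %| #|Q|.
    rewrite oQ -(part_pnat_id (_ : p.-nat (p * p)%N)); last by rewrite pnatM pnat_id.
    by apply: partn_dvd => //; rewrite cardG_gt0.
  have sQR : Q \subset <[x]>.
    apply/subsetP => u uQ; apply: oddR; first exact: subsetP sQKv u uQ.
    have := order_dvdG uQ; rewrite oQ p_part => /dvdn_odd; apply.
    by rewrite oddX oddp orbT.
  have /cyclicP [c eQ] := cyclicS sQR (cycle_cyclic x).
  have cpp : p * p %| #[c] by rewrite orderE -eQ.
  set d := #[c] %/ (p * p).
  have ecd : #[c] = (d * (p * p))%N by rewrite divnK.
  have d0 : 0 < d by move: (order_gt0 c); rewrite ecd muln_gt0 => /andP[].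
  apply: (nb (c ^+ d)).
    by apply: (subsetP sQKv); rewrite eQ mem_cycle.
  by rewrite orderXdiv ecd ?dvdn_mulr // mulKn.
have hallA : Hall Kv <[a]> by rewrite /Hall sAKv cop.
have nAKv : <[a]> <| ('C_K[v|'P])%G by rewrite /normal sAKv (subset_trans sKvK nAK).
have [H /complP [tiAH defAH]] := splitsP (SchurZassenhaus_split hallA nAKv).
have sHKv : H \subset Kv by rewrite /Kv -defAH mulG_subr.
have sHK : H \subset K := subset_trans sHKv sKvK.
have oKv : #|Kv| = (p * #|H|)%N by rewrite /Kv -defAH TI_cardMg // -orderE oa.
have copH : coprime p #|H|.
  have : (p * #|Kv : <[a]>|)%N = (p * #|H|)%N.
    by rewrite -oKv -(Lagrange sAKv) -orderE oa.
  move/eqP; rewrite eqn_pmul2l ?prime_gt0 // => /eqP <-.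
  by move: cop; rewrite -orderE oa.
have tiSH : S :&: H = 1.
  by apply: coprime_TIg; rewrite oS coprimeMl copH.
have eSH : S * H = K.
  apply/eqP; rewrite eqEcard mul_subG ?(normal_sub nSK) //=.
  by rewrite TI_cardMg // oS oK oKv mulnA.
have sdSH : S ><| H = K.
  by rewrite sdprodE ?(subset_trans sHK (normal_norm nSK)).
have faith c : c \in H -> c \in 'C(S) -> c = 1.
  move=> cH cS; apply/permP => x0; rewrite perm1.
  have cK : c \in K := subsetP sHK c cH.
  have sSc : S \subset 'C(<[c]>) by rewrite centsC cycle_subG.
  pose L := (<[c]> <*> S)%G.
  have nYL : <[c]> <| L.
    rewrite /normal joing_subl join_subG /= normG.
    exact: subset_trans sSc (cent_sub _).
  have sLK : L \subset K by rewrite join_subG cycle_subG cK (normal_sub nSK).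
  have oL : orbit 'P L x0 = pblock P x0.
    apply/eqP; rewrite eqEsubset; apply/andP; split.
      apply/subsetP => u /imsetP [h hL ->]; apply: KC; rewrite ?blkP ?blkx //.
      exact: subsetP sLK h hL.
    by rewrite -(transS _ x0 (blkP x0) (blkx x0)) /orbit imsetS // joing_subr.
  have d1 := orbit_dvd x0 nYL; rewrite oL (cardP _ (blkP x0)) in d1.
  have d2 : #|orbit 'P <[c]> x0| %| #|H|.
    rewrite card_orbit; apply: dvdn_trans (dvdn_indexg _ _) _.
    by apply: cardSg; rewrite cycle_subG.
  have : #|orbit 'P <[c]> x0| %| 1 by rewrite -(eqnP copH) dvdn_gcd d1 d2.
  rewrite dvdn1 => /cards1P [x1 ex1].
  have := mem_orbit 'P x0 (cycle_id c); have := orbit_refl 'P <[c]> x0.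
  by rewrite ex1 => /set1P -> /set1P.
have abH : abelian H.
  apply/centsP => h1 h1H h2 h2H; apply/commgP/eqP.
  apply: faith; first by rewrite groupR.
  have n1 := subsetP sHK h1 h1H; have n2 := subsetP sHK h2 h2H.
  rewrite /S centY inE; apply/andP; split.
    by apply: comm_cyc_cent; rewrite ?cycle_cyclic //; apply: (subsetP nAK).
  by apply: comm_cyc_cent; rewrite ?cyclicJ ?cycle_cyclic //; apply: (subsetP nP2K).
have [r rH rR] : exists2 r, r \in H & r \notin <[x]>.
  case: (boolP (H \subset <[x]>)) => [sHR | /subsetPn [r rH rR]]; last by exists r.
  exfalso.
  have sKvR : Kv \subset <[x]> by rewrite /Kv /K -defAH mul_subG // cycle_subG.
  have yR : y \in <[x]> := subsetP sKvR y yKv.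
  have := dih_inv xy (group1 _) aR; rewrite mul1g.
  have -> : a ^ y = a.
    by apply/conjg_fixP/commgP; apply: (centsP (cycle_abelian x)).
  move=> e.
  have : a ^+ 2 == 1 by rewrite expg2 {2}e mulgV.
  rewrite -order_dvdn oa => /dvdn_leq.
  by move/(_ isT); rewrite leqNgt p3.
have ex2 h : h \in H -> h ^+ 2 = 1.
  move=> hH; have hKv := subsetP sHKv h hH.
  case: (boolP (h \in <[x]>)) => hR.
    have [r1 r1R rE] := dih_elem defKv y2 xy (subsetP sHKv r rH) rR.
    have := dih_inv xy r1R hR; rewrite -rE.
    have -> : h ^ r = h by apply/conjg_fixP/commgP; apply: (centsP abH).
    by move=> e; rewrite expg2 {2}e mulgV.
  have [r1 r1R ->] := dih_elem defKv y2 xy hKv hR.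
  exact: dih_sq y2 xy r1R.
have o2 h : h \in H -> h != 1 -> #[h] = 2.
  move=> hH hn1; have : #[h] %| 2 by rewrite order_dvdn ex2.
  case/primeP: (pdiv_prime (isT : 1 < 2)) => _ /[apply] /orP[] /eqP // o1.
  by move: hn1; rewrite -order_eq1 o1.
have rn1 : r != 1 by apply: contraNneq rR => ->; rewrite group1.
have le4 : #|H| <= 4.
  have oy : #|<[y]>| <= 2.
    by rewrite -orderE; apply: dvdn_leq => //; rewrite order_dvdn y2.
  have leKv : #|Kv| <= #|<[x]>| * 2.
    have := mul_cardG <[x]> <[y]>.
    rewrite -norm_joinEr ?cycle_subG; last by apply/normP; rewrite -cycleJ xy cycleV.
    rewrite defKv => e.
    apply: leq_trans (leq_mul (leqnn _) oy); rewrite e.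
    by apply: leq_pmulr; rewrite cardG_gt0.
  have leHR : #|H :&: <[x]>| <= 2.
    have /cyclicP [t eT] := cyclicS (subsetIr H <[x]>) (cycle_cyclic x).
    have tH : t \in H by have := cycle_id t; rewrite -eT => /setIP[].
    by rewrite eT -orderE; apply: dvdn_leq => //; rewrite order_dvdn ex2.
  have := mul_cardG H <[x]>.
  have leHRc : #|H * <[x]>| <= #|Kv| by apply: subset_leq_card; rewrite mul_subG.
  move=> e.
  have : #|H| * #|<[x]>| <= 4 * #|<[x]>|.
    rewrite e; apply: leq_trans (leq_mul (leq_trans leHRc leKv) leHR) _.
    by rewrite -mulnA mulnC.
  by rewrite leq_pmul2r ?cardG_gt0.
have Hev : 2 %| #|H| by rewrite -(o2 r rH rn1) order_dvdG.
have isoZ (X : {group {perm Omega}}) : #|X| = p -> X \isog Zp p.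
  move=> oX; rewrite isog_cyclic_card; last by rewrite prime_cyclic ?oX.
  by rewrite oX card_Zp ?prime_gt0 // prime_cyclic ?card_Zp ?prime_gt0 // eqxx.
exists S, H; split => //.
  apply: (isog_dprod dS (setX_dprod (Zp p) (Zp p))).
    have iA : <[a]> \isog Zp p by apply: isoZ; rewrite -orderE.
    exact: (isog_trans iA (isog_setX1 _ _)).
  exact: (isog_trans (isoZ P2 oP2) (isog_set1X _ _)).
have : #|H| \in [:: 2; 4].
  move: le4 Hev (cardG_gt0 H); case: #|H| => [|[|[|[|[|]]]]] //.
rewrite !inE => /orP [] /eqP oH.
  left; rewrite isog_cyclic_card; last by rewrite prime_cyclic ?oH.
  by rewrite prime_cyclic ?card_Zp ?oH.
right.
have [h2 h2H h2n] : exists2 h2, h2 \in H & h2 \notin [set 1; r].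
  apply/subsetPn; apply/negP => sH.
  by have := subset_leq_card sH; rewrite oH cards2; case: (1 != r).
have h2n1 : h2 != 1 by apply: contraNneq h2n => ->; rewrite !inE eqxx.
have h2r : r != h2 by apply: contraNneq h2n => ->; rewrite !inE eqxx orbT.
have := involutions_gen_dihedral (o2 r rH rn1) (o2 h2 h2H h2n1) h2r.
set G0 := <<[set r; h2]>>.
have sG0H : G0 \subset H by rewrite gen_subG; apply/subsetP => u; rewrite !inE => /orP[] /eqP ->.
have eG0 : G0 = H.
  apply/eqP; rewrite eqEcard sG0H oH /=.
  have : #|G0| %| 4 by rewrite -oH cardSg.
  have : 2 < #|G0|.
    have : [set 1; r; h2] \subset G0.
      apply/subsetP => u; rewrite !inE; case/orP => [/orP [] | ] /eqP ->; rewrite ?group1 // mem_gen // !inE eqxx ?orbT ?orTb //.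
    move/subset_leq_card; apply: leq_trans.
    by rewrite -setUA cardsU1 cards2 !inE negb_or eq_sym rn1 eq_sym h2n1 h2r.
  by case: #|G0| => [|[|[|[|[|]]]]].
rewrite eG0 oH => iso4.
exact: isoGrp_trans iso4 (Grp_dihedral (isT : 1 < 2)).
Qed.
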